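(* Let $A$ be an infinite set and let $\mathcal{L}$ be an algebra in the variety $V(\Omega(A))$ with more than one element. Then the following are equivalent: (1) $\mathcal{L}$ is simple; (2) $\mathcal{L}$ is subdirectly irreducible; (3) $\mathcal{L}$ is directly indecomposable; (4) the map $e:\Omega(A)\to\mathcal{L}$, $e(a)=\hat{a}^{\mathcal{L}}$, is an elementary embedding. Moreover, if $\mathcal{L}=\Omega(A)^{F}/Z$ is a limit reduced power of $\Omega(A)$, then (1)–(4) are also equivalent to: (5) $Z$ is an ultrafilter on the Boolean algebra $\{\emptyset\}\cup\bigcup F$.
   Context: For each $a\in A$ let $\hat{a}$ be a constant symbol, and for each $n\geq1$ and each $f:A^{n}\to A$ let $\hat{f}$ be an $n$-ary operation symbol. $\Omega(A)$ is the algebra with universe $A$ in which $\hat{a}$ is interpreted as $a$ and $\hat{f}$ as $f$; $V(\Omega(A))$ is the variety it generates. For a set $I$, $\Pi(I)$ is the lattice of partitions of $I$ (ordered by refinement, $\wedge$ = common refinement); for $f:I\to X$, $\Pi(f)$ is the partition of $I$ into nonempty fibers of $f$. For a filter $F$ on $\Pi(I)$, $\Omega(A)^{F}=\{f\in A^{I}:\Pi(f)\in F\}$ is a subalgebra of $\Omega(A)^{I}$, and $\{\emptyset\}\cup\bigcup F$ (where $\bigcup F$ is the set of all blocks of partitions in $F$) is a Boolean algebra of subsets of $I$. For a filter $Z$ on this Boolean algebra, $\Omega(A)^{F}/Z$ is the quotient of $\Omega(A)^{F}$ by the congruence $\{(f,g): \{i\in I:f(i)=g(i)\}\in Z\}$;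 such a quotient is called a limit reduced power of $\Omega(A)$. *)

(* Defs.v *)
From mathcomp Require Import all_boot.
From Stdlib Require List.
Set Implicit Arguments. Unset Strict Implicit. Unset Printing Implicit Defensive.

(* One constant symbol  Cst a  for each a : A, and one n-ary operation symbol
   Op n f  (of arity n.+1 >= 1) for each f : A^(n+1) -> A. *)
Inductive sym (A : Type) : Type :=
| Cst of A
| Op (n : nat) of (('I_n.+1 -> A) -> A).

Definition arity (A : Type) (s : sym A) : nat :=
  match s with Cst _ => 0 | Op n _ => n.+1 end.

Record alg (A : Type) := Alg {
  carrier :> Type;
  interp : forall s : sym A, ('I_(arity s) -> carrier) -> carrier }.

Arguments interp {A} c s _ : rename.

Definition Omega (A : Type) : alg A :=
  @Alg A A (fun s => match s return ('I_(arity s) -> A) -> A with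
                     | Cst a => fun _ => a
                     | Op n f => fun args => f args end).

Lemma I0_empty : 'I_0 -> False. Proof. by case. Qed.
Definition noargs (T : Type) (k : 'I_0) : T := False_rect T (I0_empty k).

Definition const_map (A : Type) (L : alg A) (a : A) : L :=
  interp L (Cst a) (@noargs L).

Inductive term (A : Type) : Type :=
| Var of nat
| App (s : sym A) of ('I_(arity s) -> term A).

Fixpoint eval (A : Type) (L : alg A) (v : nat -> L) (t : term A) : L :=
  match t with
  | Var i => v i
  | App s args => interp L s (fun k => eval v (args k))
  end.

Inductive form (A : Type) : Type :=
| FEq of term A & term A
| FNot of form A
| FAnd of form A & form A
| FEx of nat & form A.

Definition upd (T : Type) (v : nat -> T) (i : nat) (x : T) : nat -> T :=
  fun j => if j == i then x else v j.

Fixpoint sat (A : Type) (L : alg A) (v : nat -> L) (phi : form A) : Prop :=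
  match phi with
  | FEq t1 t2 => eval v t1 = eval v t2
  | FNot p => ~ sat v p
  | FAnd p q => sat v p /\ sat v q
  | FEx i p => exists x : L, sat (upd v i x) p
  end.

Definition elementary_embedding (A : Type) (L : alg A) (e : A -> L) : Prop :=
  forall (phi : form A) (v : nat -> A), sat (L := Omega A) v phi <-> sat (e \o v) phi.

(* L lies in the variety generated by Omega(A): it satisfies every identity
   valid in Omega(A) (Birkhoff: V(K) = Mod Id(K)). *)
Definition in_variety (A : Type) (L : alg A) : Prop :=
  forall t1 t2 : term A,
    (forall v : nat -> A, eval (L := Omega A) v t1 = eval (L := Omega A) v t2) ->
    forall w : nat -> L, eval w t1 = eval w t2.

Definition nontrivial (A : Type) (L : alg A) : Prop := exists x y : L, x <> y.
Definition trivial_alg (A : Type) (L : alg A) : Prop := forall x y : L, x = y.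

Definition infinite_type (T : Type) : Prop := forall l : list T, exists x, ~ List.In x l.

Definition surjective (X Y : Type) (f : X -> Y) : Prop := forall y, exists x, f x = y.

Definition hom (A : Type) (L M : alg A) (h : L -> M) : Prop :=
  forall s (args : 'I_(arity s) -> L), h (interp L s args) = interp M s (h \o args).

Definition prod_alg (A : Type) (I : Type) (B : I -> alg A) : alg A :=
  @Alg A (forall i, B i) (fun s args i => interp (B i) s (fun k => args k i)).

Definition prod2_alg (A : Type) (B C : alg A) : alg A :=
  @Alg A (B * C)%type
    (fun s args => (interp B s (fun k => (args k).1), interp C s (fun k => (args k).2))).

Definition congruence (A : Type) (L : alg A) (th : L -> L -> Prop) : Prop :=
  [/\ (forall x, th x x), (forall x y, th x y -> th y x),
      (forall x y z, th x y -> th y z -> th x z) &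
      (forall s (a1 a2 : 'I_(arity s) -> L), (forall k, th (a1 k) (a2 k)) ->
          th (interp L s a1) (interp L s a2))].

Definition simple_alg (A : Type) (L : alg A) : Prop :=
  nontrivial L /\
  forall th, congruence th -> (forall x y, th x y -> x = y) \/ (forall x y : L, th x y).

Definition subdirectly_irreducible (A : Type) (L : alg A) : Prop :=
  nontrivial L /\
  forall (I : Type) (B : I -> alg A) (h : L -> prod_alg B),
    hom h -> injective h -> (forall i, surjective (fun x => h x i)) ->
    exists i, injective (fun x => h x i) /\ surjective (fun x => h x i).

Definition directly_indecomposable (A : Type) (L : alg A) : Prop :=
  forall (B C : alg A) (h : L -> prod2_alg B C),
    hom h -> injective h -> surjective h -> trivial_alg B \/ trivial_alg C.

(* Partitions of I are represented by the corresponding equivalence relations;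
   refinement is inclusion of relations, common refinement is intersection. *)
Definition is_equiv (I : Type) (P : I -> I -> Prop) : Prop :=
  [/\ (forall i, P i i), (forall i j, P i j -> P j i) &
      (forall i j k, P i j -> P j k -> P i k)].

Definition kerP (I X : Type) (f : I -> X) : I -> I -> Prop := fun i j => f i = f j.

Definition partition_filter (I : Type) (F : (I -> I -> Prop) -> Prop) : Prop :=
  [/\ (forall P, F P -> is_equiv P), (exists P, F P),
      (forall P Q, F P -> is_equiv Q -> (forall i j, P i j -> Q i j) -> F Q) &
      (forall P Q, F P -> F Q -> F (fun i j => P i j /\ Q i j))].

Definition block_of (I : Type) (F : (I -> I -> Prop) -> Prop) (X : I -> Prop) : Prop :=
  exists P, F P /\ exists i, forall j, X j <-> P i j.

Definition inBA (I : Type) (F : (I -> I -> Prop) -> Prop) (X : I -> Prop) : Prop :=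
  (forall i, ~ X i) \/ block_of F X.

Definition BA_filter (I : Type) (F : (I -> I -> Prop) -> Prop) (Z : (I -> Prop) -> Prop) : Prop :=
  [/\ (forall X, Z X -> inBA F X), (exists X, Z X),
      (forall X Y, Z X -> inBA F Y -> (forall i, X i -> Y i) -> Z Y) &
      (forall X Y, Z X -> Z Y -> Z (fun i => X i /\ Y i))].

Definition proper_filter (I : Type) (Z : (I -> Prop) -> Prop) : Prop :=
  forall X, Z X -> exists i, X i.

Definition BA_ultrafilter (I : Type) (F : (I -> I -> Prop) -> Prop) (Z : (I -> Prop) -> Prop) : Prop :=
  [/\ BA_filter F Z, proper_filter Z &
      forall Z', BA_filter F Z' -> proper_filter Z' -> (forall X, Z X -> Z' X) ->
                 forall X, Z' X -> Z X].

Definition OmegaF (A I : Type) (F : (I -> I -> Prop) -> Prop) : Type :=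
  {f : I -> A | F (kerP f)}.

(* L = Omega(A)^F / Z, presented (up to isomorphism, by the first isomorphism
   theorem) as a surjective homomorphism h : Omega(A)^F -> L whose kernel is the
   congruence {(f,g) | [i | f i = g i] in Z}. *)
Definition limit_reduced_power_pres (A : Type) (L : alg A) (I : Type)
  (F : (I -> I -> Prop) -> Prop) (Z : (I -> Prop) -> Prop) (h : OmegaF A F -> L) : Prop :=
  [/\ partition_filter F, BA_filter F Z, surjective h,
      (forall f g : OmegaF A F, h f = h g <-> Z (fun i => sval f i = sval g i)) &
      (forall s (args : 'I_(arity s) -> OmegaF A F) (g : OmegaF A F),
         (forall i, sval g i = interp (Omega A) s (fun k => sval (args k) i)) ->
         h g = interp L s (fun k => h (args k)))].

(* Main.v *)
Require Import Defs.
From mathcomp Require Import all_boot.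
From Stdlib Require Import ClassicalEpsilon FunctionalExtensionality ProofIrrelevance Classical.
Set Implicit Arguments. Unset Strict Implicit. Unset Printing Implicit Defensive.

Definition sw (A : Type) (x y u v : A) : A :=
  if excluded_middle_informative (x = y) then u else v.

Ltac swt := rewrite /sw; repeat match goal with
  |- context[excluded_middle_informative ?P] => destruct (excluded_middle_informative P); simpl end;
  try congruence.

Definition o40 : 'I_4 := @Ordinal 4 0 isT.
Definition o41 : 'I_4 := @Ordinal 4 1 isT.
Definition o42 : 'I_4 := @Ordinal 4 2 isT.
Definition o43 : 'I_4 := @Ordinal 4 3 isT.
Definition args4 (T : Type) (x y z u : T) : 'I_4 -> T :=
  fun k => match val k with 0 => x | 1 => y | 2 => z | _ => u end.
Definition s4 (A : Type) : sym A :=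
  @Op A 3 (fun a : 'I_4 -> A => sw (a o40) (a o41) (a o42) (a o43)).
Definition S4 (A : Type) (M : alg A) (x y u v : M) : M := interp M (s4 A) (args4 x y u v).
Definition T4 (A : Type) (x y u v : term A) : term A := @App A (s4 A) (args4 x y u v).
Definition TC (A : Type) (a : A) : term A := @App A (Cst a) (@noargs _).

Lemma args4_map (T U : Type) (f : T -> U) x y z u :
  (fun k => f (args4 x y z u k)) = args4 (f x) (f y) (f z) (f u).
Proof. apply functional_extensionality => k; rewrite /args4; by case: (val k) => [|[|[|]]]. Qed.

Lemma eval_T4 A (M : alg A) w x y u v :
  eval w (T4 x y u v) = S4 (eval w x) (eval w y) (eval w u) (eval w v) :> M.
Proof. rewrite /T4 /S4 /=; f_equal; exact: args4_map. Qed.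

Lemma eval_TC A (M : alg A) (w : nat -> M) a : eval w (TC a) = const_map M a.
Proof.
rewrite /TC /const_map /=; f_equal; apply functional_extensionality => k.
by case: (I0_empty k).
Qed.

Lemma S4_Omega A (x y u v : A) : S4 (M := Omega A) x y u v = sw x y u v.
Proof. by []. Qed.

Definition vl4 (T : Type) (x y u z : T) : nat -> T :=
  fun n => match n with 0 => x | 1 => y | 2 => u | _ => z end.

Definition V0 A := Var A 0. Definition V1 A := Var A 1.
Definition V2 A := Var A 2. Definition V3 A := Var A 3.

Ltac omg := let v := fresh "v" in move=> v; rewrite ?eval_T4 ?eval_TC ?S4_Omega /=; swt.

Ltac lft HV t1 t2 w := have := HV t1 t2 _ w; rewrite ?eval_T4 ?eval_TC /=; apply; omg.

Lemma I1 A (M : alg A) (HV : in_variety M) (x u v : M) : S4 x x u v = u.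
Proof. lft HV (T4 (V0 A) (V0 A) (V1 A) (V2 A)) (V1 A) (vl4 x u v v). Qed.

Lemma I2 A (M : alg A) (HV : in_variety M) (x y u v z : M) :
  S4 x y (S4 x y u v) z = S4 x y u z.
Proof.
lft HV (T4 (V0 A) (V1 A) (T4 (V0 A) (V1 A) (V2 A) (V3 A)) (Var A 4)) (T4 (V0 A) (V1 A) (V2 A) (Var A 4))
  (fun n => match n with 0 => x | 1 => y | 2 => u | 3 => v | _ => z end).
Qed.

Lemma I3 A (M : alg A) (HV : in_variety M) (x y w z u : M) :
  S4 x y w (S4 x y z u) = S4 x y w u.
Proof.
lft HV (T4 (V0 A) (V1 A) (V2 A) (T4 (V0 A) (V1 A) (V3 A) (Var A 4))) (T4 (V0 A) (V1 A) (V2 A) (Var A 4))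
  (fun n => match n with 0 => x | 1 => y | 2 => w | 3 => z | _ => u end).
Qed.

Lemma I4 A (M : alg A) (HV : in_variety M) (x y z : M) : S4 x y x z = S4 x y y z.
Proof. lft HV (T4 (V0 A) (V1 A) (V0 A) (V2 A)) (T4 (V0 A) (V1 A) (V1 A) (V2 A)) (vl4 x y z z). Qed.

Lemma I6 A (M : alg A) (HV : in_variety M) (x y u : M) : S4 x y u u = u.
Proof. lft HV (T4 (V0 A) (V1 A) (V2 A) (V2 A)) (V2 A) (vl4 x y u u). Qed.

Lemma I7 A (M : alg A) (HV : in_variety M) (x y : M) : S4 x y x y = y.
Proof. lft HV (T4 (V0 A) (V1 A) (V0 A) (V1 A)) (V1 A) (vl4 x y x y). Qed.

Lemma I8 A (M : alg A) (HV : in_variety M) (a0 a1 : A) (ne : a0 <> a1) (x y u v : M) :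
  S4 x y u v = S4 (S4 x y (const_map M a1) (const_map M a0)) (const_map M a0) v u.
Proof.
lft HV (T4 (V0 A) (V1 A) (V2 A) (V3 A))
  (T4 (T4 (V0 A) (V1 A) (TC a1) (TC a0)) (TC a0) (V3 A) (V2 A)) (vl4 x y u v).
Qed.

Lemma I9 A (M : alg A) (HV : in_variety M) (x y u z : M) :
  S4 x y (S4 x y u z) (S4 x y z u) = u.
Proof.
lft HV (T4 (V0 A) (V1 A) (T4 (V0 A) (V1 A) (V2 A) (V3 A)) (T4 (V0 A) (V1 A) (V3 A) (V2 A))) (V2 A)
  (vl4 x y u z).
Qed.

Lemma I10 A (M : alg A) (HV : in_variety M) (a b : A) (ne : a <> b) (u v : M) :
  S4 (const_map M a) (const_map M b) u v = v.
Proof. lft HV (T4 (TC a) (TC b) (V0 A) (V1 A)) (V1 A) (vl4 u v v v). Qed.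

Lemma key A (M : alg A) (HV : in_variety M) (a0 a1 : A) (ne : a0 <> a1) (a b : M) :
  S4 a b (const_map M a1) (const_map M a0) = const_map M a0 ->
  forall u v, S4 a b u v = v.
Proof. by move=> H u v; rewrite (I8 HV ne) H I1. Qed.

Definition ext (T : Type) n (d : T) (f : 'I_n -> T) (m : nat) : T :=
  if insub m is Some k then f k else d.
Lemma ext_val T n (d : T) (f : 'I_n -> T) (k : 'I_n) : ext d f (val k) = f k.
Proof. by rewrite /ext valK. Qed.

Lemma C1 A (M : alg A) (HV : in_variety M) (x y z : M) s (args : 'I_(arity s) -> M) :
  S4 x y (interp M s args) z = S4 x y (interp M s (fun k => S4 x y (args k) z)) z.
Proof.
have := HV (T4 (V0 A) (V1 A) (App (fun k : 'I_(arity s) => Var A (val k).+3)) (V2 A))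
   (T4 (V0 A) (V1 A) (App (fun k : 'I_(arity s) => T4 (V0 A) (V1 A) (Var A (val k).+3) (V2 A))) (V2 A)) _
   (fun m => match m with 0 => x | 1 => y | 2 => z | m.+3 => ext z args m end).
rewrite !eval_T4 /=.
have -> : (fun k : 'I_(arity s) => ext z args (val k)) = args.
  by apply functional_extensionality => k; rewrite ext_val.
have -> : (fun k : 'I_(arity s) => eval (fun m => match m with 0 => x | 1 => y | 2 => z | m.+3 => ext z args m end)
      (T4 (V0 A) (V1 A) (Var A (val k).+3) (V2 A))) = (fun k => S4 x y (args k) z).
  by apply functional_extensionality => k; rewrite eval_T4 /= ext_val.
apply => v; rewrite ?eval_T4 ?S4_Omega /=.
rewrite /sw; case: excluded_middle_informative => e //=.
Qed.

Lemma C2 A (M : alg A) (HV : in_variety M) (x y z : M) s (args : 'I_(arity s) -> M) :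
  S4 x y z (interp M s args) = S4 x y z (interp M s (fun k => S4 x y z (args k))).
Proof.
have := HV (T4 (V0 A) (V1 A) (V2 A) (App (fun k : 'I_(arity s) => Var A (val k).+3)))
   (T4 (V0 A) (V1 A) (V2 A) (App (fun k : 'I_(arity s) => T4 (V0 A) (V1 A) (V2 A) (Var A (val k).+3)))) _
   (fun m => match m with 0 => x | 1 => y | 2 => z | m.+3 => ext z args m end).
rewrite !eval_T4 /=.
have -> : (fun k : 'I_(arity s) => ext z args (val k)) = args.
  by apply functional_extensionality => k; rewrite ext_val.
have -> : (fun k : 'I_(arity s) => eval (fun m => match m with 0 => x | 1 => y | 2 => z | m.+3 => ext z args m end)
      (T4 (V0 A) (V1 A) (V2 A) (Var A (val k).+3))) = (fun k => S4 x y z (args k)).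
  by apply functional_extensionality => k; rewrite eval_T4 /= ext_val.
apply => v; rewrite ?eval_T4 ?S4_Omega /=.
rewrite /sw; case: excluded_middle_informative => e //=.
Qed.

Definition Disc A (M : alg A) : Prop := forall a b u v : M, a <> b -> S4 a b u v = v.

Lemma sig_eq (T : Type) (P : T -> Prop) (x y : sig P) : proj1_sig x = proj1_sig y -> x = y.
Proof. case: x => x px; case: y => y py /= E; subst y; f_equal; apply proof_irrelevance. Qed.

Lemma disc_simple A (M : alg A) (HV : in_variety M) : nontrivial M -> Disc M -> simple_alg M.
Proof.
move=> nt D; split => // th [r sy tr cp].
case: (classic (forall x y, th x y -> x = y)) => [H|H]; [by left | right].
have [x [y [txy nxy]]] : exists x y, th x y /\ x <> y.
  apply: NNPP => N; apply: H => x y txy; apply: NNPP => nxy; apply: N; by exists x, y.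
move=> u v.
have := cp (s4 A) (args4 x x u v) (args4 x y u v).
rewrite -/(S4 x x u v) -/(S4 x y u v) (I1 HV) (D _ _ _ _ nxy); apply.
by move=> k; rewrite /args4; case: (val k) => [|[|[|?]]].
Qed.

Lemma simple_disc A (M : alg A) (HV : in_variety M) (a0 a1 : A) (ne : a0 <> a1) :
  simple_alg M -> Disc M.
Proof.
move=> [nt Hs] a b u v nab.
pose c0 := const_map M a0; pose c1 := const_map M a1.
pose psi := fun w => S4 a b w c0.
have cg : congruence (fun x y => psi x = psi y).
  split => //; first by move=> x y z -> .
  move=> s a1' a2' H; rewrite /psi (C1 HV) (C1 HV a b c0 a2'); do 2 f_equal.
  by apply functional_extensionality => k; apply: H.
case: (Hs _ cg) => [H|H].
  by case: nab; apply: H; rewrite /psi (I4 HV).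
apply: (key HV ne); have := H c1 c0; rewrite /psi (I6 HV) => ->; done.
Qed.

Lemma simple_SI A (M : alg A) : simple_alg M -> subdirectly_irreducible M.
Proof.
move=> [nt Hs]; split => // I B h hh hinj hsurj.
case: (classic (exists i, injective (fun x => h x i))) => [[i Hi]|N].
  by exists i.
exfalso.
have allk : forall i x y, h x i = h y i.
  move=> i; have cg : congruence (fun x y => h x i = h y i).
    split => //; first by move=> x y z -> .
    move=> s a1 a2 H; rewrite !hh /=; f_equal.
    by apply functional_extensionality => k; apply: H.
  case: (Hs _ cg) => // H; case: N; by exists i => x y /H.
case: nt => x [y nxy]; apply: nxy; apply: hinj.
apply: functional_extensionality_dep => i; apply: allk.
Qed.

Lemma SI_DI A (M : alg A) (a0 : A) : subdirectly_irreducible M -> directly_indecomposable M.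
Proof.
move=> [nt Hs] B C h hh hinj hsurj.
pose B' := fun b : bool => if b then B else C.
pose h' := (fun x => (fun b => match b as b' return carrier (B' b') with
                               true => (h x).1 | false => (h x).2 end) : prod_alg B').
have hh' : hom h'.
  move=> s args; apply: functional_extensionality_dep => b; case: b; rewrite /h' hh //.
have hinj' : injective h'.
  move=> x y E; apply: hinj.
  have E1 := f_equal (fun F => F true) E; have E2 := f_equal (fun F => F false) E.
  by apply: injective_projections.
have hsurj' : forall i, surjective (fun x => h' x i).
  case => y.
    have [x hx] := hsurj (y, const_map C a0); by exists x; rewrite /h' /= hx.
  have [x hx] := hsurj (const_map B a0, y); by exists x; rewrite /h' /= hx.
have [i [Hi _]] := Hs _ B' h' hh' hinj' hsurj'.
case: i Hi => Hi.
  right => c c'.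
  have [x hx] := hsurj (const_map B a0, c); have [x' hx'] := hsurj (const_map B a0, c').
  have : x = x' by apply: Hi; rewrite /h' /= hx hx'.
  by move=> E; subst x'; rewrite hx in hx'; case: hx'.
left => c c'.
have [x hx] := hsurj (c, const_map C a0); have [x' hx'] := hsurj (c', const_map C a0).
have : x = x' by apply: Hi; rewrite /h' /= hx hx'.
by move=> E; subst x'; rewrite hx in hx'; case: hx'.
Qed.

Lemma DI_disc A (M : alg A) (HV : in_variety M) (a0 a1 : A) (ne : a0 <> a1) :
  directly_indecomposable M -> Disc M.
Proof.
move=> DI a b u v nab.
pose c0 := const_map M a0; pose c1 := const_map M a1.
pose psi := fun w => S4 a b w c0.
pose chi := fun w => S4 a b c0 w.
have psiP : forall w, psi (psi w) = psi w by move=> w; rewrite /psi (I2 HV).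
have chiP : forall w, chi (chi w) = chi w by move=> w; rewrite /chi (I3 HV).
pose B := @Alg A {x : M | psi x = x}
  (fun s args => exist _ (psi (interp M s (fun k => proj1_sig (args k)))) (psiP _)).
pose C := @Alg A {x : M | chi x = x}
  (fun s args => exist _ (chi (interp M s (fun k => proj1_sig (args k)))) (chiP _)).
pose h := (fun x => (exist _ (psi x) (psiP x) : B, exist _ (chi x) (chiP x) : C) : prod2_alg B C).
have hh : hom h.
  move=> s args; rewrite /h /=; f_equal; apply: sig_eq => /=.
    by rewrite /psi (C1 HV).
  by rewrite /chi (C2 HV).
have hinj : injective h.
  move=> x y E.
  have E1 := f_equal (fun p => proj1_sig p.1) E; have E2 := f_equal (fun p => proj1_sig p.2) E.
  simpl in E1, E2.
  by rewrite -(I9 HV a b x c0) -(I9 HV a b y c0) -/(psi x) -/(psi y) -/(chi x) -/(chi y) E1 E2.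
have hsurj : surjective h.
  move=> [[p pp] [q qq]]; exists (S4 a b p q); rewrite /h; f_equal; apply: sig_eq => /=.
    by rewrite /psi (I2 HV).
  by rewrite /chi (I3 HV).
case: (DI B C h hh hinj hsurj) => T.
  have := T (exist _ (psi c0) (psiP c0)) (exist _ (psi c1) (psiP c1)).
  move/(f_equal (@proj1_sig _ _)) => /= E.
  apply: (key HV ne); rewrite -/c0 -/c1; move: E; rewrite /psi (I6 HV) => E; symmetry; exact: E.
have := T (exist _ (chi a) (chiP a)) (exist _ (chi b) (chiP b)).
move/(f_equal (@proj1_sig _ _)) => /= E.
case: nab.
by rewrite -(I6 HV a b a) -{1}(I3 HV a b a c0 a) -/(chi a) E /chi (I3 HV) (I7 HV).
Qed.

Lemma EE_disc A (M : alg A) (a0 : A) : elementary_embedding (@const_map A M) -> Disc M.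
Proof.
move=> EE a b u v nab.
pose phi := FNot (FEx 0 (FEx 1 (FEx 2 (FEx 3 (FAnd (FNot (FEq (V0 A) (V1 A)))
            (FNot (FEq (T4 (V0 A) (V1 A) (V2 A) (V3 A)) (V3 A)))))))).
have [H _] := EE phi (fun _ => a0).
have := H; rewrite /phi /=.
move=> H1; apply: NNPP => N; apply: H1.
  move=> [x [y [z [w []]]]]; rewrite /upd /= => nxy; by rewrite /sw; case: excluded_middle_informative => //= ? ? [].
exists a, b, u, v; rewrite /upd /=; split => //; rewrite args4_map /=; exact: N.
Qed.

Fixpoint tb A (t : term A) : nat :=
  match t with Var i => i.+1 | App s args => \max_(k < arity s) tb (args k) end.

Lemma tb_app A s (args : 'I_(arity s) -> term A) : tb (App args) = \max_(k < arity s) tb (args k).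
Proof. by rewrite /= unlock. Qed.

Fixpoint tsubst A (i : nat) (u : term A) (t : term A) : term A :=
  match t with
  | Var j => if j == i then u else Var A j
  | App s args => App (fun k => tsubst i u (args k))
  end.

Lemma eval_ext A (M : alg A) (t : term A) (v v' : nat -> M) :
  (forall m, m < tb t -> v m = v' m) -> eval v t = eval v' t.
Proof.
elim: t v v' => [n|s args IH] v v' H; first by apply: H.
rewrite /=; f_equal; apply functional_extensionality => k; apply: IH => m lt; apply: H.
apply: (leq_trans lt); rewrite tb_app; exact: (leq_bigmax k).
Qed.

Lemma eval_subst A (M : alg A) (t u : term A) i (v : nat -> M) :
  eval v (tsubst i u t) = eval (upd v i (eval v u)) t.
Proof.
elim: t => [n|s args IH] /=.
  by rewrite /upd; case: (n == i).
by f_equal; apply functional_extensionality => k.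
Qed.

Lemma upd_agree T (v v' : nat -> T) i x N :
  (forall m, m < N -> m <> i -> v m = v' m) -> forall m, m < N -> upd v i x m = upd v' i x m.
Proof. move=> H m lt; rewrite /upd; case: eqP => // ne; exact: H. Qed.

Definition fsk A (a0 : A) (tau : term A) (i N : nat) (args : 'I_N.+1 -> A) : A :=
  epsilon (inhabits a0)
    (fun y => eval (L := Omega A) (upd (ext a0 args) i y) tau = a0).

Definition Skt A (a0 : A) (tau : term A) (i : nat) : term A :=
  @App A (@Op A (tb tau) (@fsk A a0 tau i (tb tau))) (fun k => Var A (val k)).

Fixpoint trans A (a0 a1 : A) (phi : form A) : term A :=
  match phi with
  | FEq t1 t2 => T4 t1 t2 (TC a0) (TC a1)
  | FNot p => T4 (trans a0 a1 p) (TC a0) (TC a1) (TC a0)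
  | FAnd p q => T4 (trans a0 a1 p) (TC a0) (trans a0 a1 q) (TC a1)
  | FEx i p => tsubst i (Skt a0 (trans a0 a1 p) i) (trans a0 a1 p)
  end.

Lemma ext_lt A N (a0 : A) (v : nat -> A) m : m < N.+1 ->
  ext a0 (fun k : 'I_N.+1 => v (val k)) m = v m.
Proof. by move=> lt; rewrite /ext insubT. Qed.

Lemma sem A (M : alg A) (HV : in_variety M) (D : Disc M) (a0 a1 : A)
  (ne : const_map M a0 <> const_map M a1) :
  forall phi (w : nat -> M), sat w phi <-> eval w (trans a0 a1 phi) = const_map M a0.
Proof.
elim => [t1 t2|p IH|p IHp q IHq|i p IH] w; cbn [sat trans].
- rewrite eval_T4 !eval_TC; split => [->|]; first by rewrite (I1 HV).
  case: (classic (eval w t1 = eval w t2)) => // n; rewrite D //; by move/esym.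
- rewrite eval_T4 !eval_TC IH.
  case: (classic (eval w (trans a0 a1 p) = const_map M a0)) => [e|n].
    by rewrite e (I1 HV); split => // /esym.
  by rewrite D.
- rewrite eval_T4 !eval_TC IHp IHq.
  case: (classic (eval w (trans a0 a1 p) = const_map M a0)) => [e|n].
    by rewrite e (I1 HV); split => [[]|].
  by rewrite D //; split => [[]|/esym].
- set tau := trans a0 a1 p; set N := tb tau.
  rewrite eval_subst; split; last by move=> H; exists (eval w (Skt a0 tau i)); apply/IH.
  move=> [x /IH Hx].
  pose w' := upd w N.+1 x.
  have Skw : eval w' (Skt a0 tau i) = eval w (Skt a0 tau i).
    rewrite /= /w' /upd; f_equal; apply functional_extensionality => k.
    by case: eqP => // E; have := ltn_ord k; rewrite -/N E ltnn.
  have agree : forall y, eval (upd w' i y) tau = eval (upd w i y) tau.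
    move=> y; apply: eval_ext; apply: upd_agree => m lt _.
    by rewrite /w' /upd; case: eqP => // E; move: lt; rewrite E -/N ltnNge leqW.
  have := HV (T4 (tsubst i (Var A N.+1) tau) (TC a0) (tsubst i (Skt a0 tau i) tau) (TC a0)) (TC a0) _ w'.
  have wN : eval w' (Var A N.+1) = x by rewrite /= /w' /upd eqxx.
  rewrite eval_T4 !eval_TC !eval_subst wN agree Skw agree -/tau in Hx *; rewrite Hx (I1 HV); apply.
  move=> v; rewrite eval_T4 !eval_subst S4_Omega /=.
  rewrite /sw; case: excluded_middle_informative => //= E.
  rewrite /Skt -/N /fsk.
  set P := fun y => _.
  have ag : forall y, eval (L := Omega A) (upd (ext a0 (fun k : 'I_N.+1 => v (val k))) i y) tau =
                      eval (L := Omega A) (upd v i y) tau.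
    move=> y; apply: eval_ext; apply: upd_agree => m lt _; apply: ext_lt; exact: leqW.
  have : P (epsilon (inhabits a0) P).
    apply: epsilon_spec; exists (v N.+1); rewrite /P ag; exact: E.
  by rewrite /P ag.
Qed.

Lemma Omega_var A : in_variety (Omega A).
Proof. by move=> t1 t2 H w; apply: H. Qed.

Lemma Omega_disc A : Disc (Omega A).
Proof. move=> a b u v nab; rewrite S4_Omega /sw; by case: excluded_middle_informative. Qed.


Lemma const_hom A (M : alg A) (HV : in_variety M) (w : nat -> M) s (b : 'I_(arity s) -> A) :
  interp M s (fun k => const_map M (b k)) = const_map M (interp (Omega A) s b).
Proof.
have := HV (App (fun k => TC (b k))) (TC (interp (Omega A) s b)) _ w.
rewrite eval_TC /=.
have -> : (fun k => eval w (TC (b k))) = (fun k => const_map M (b k)).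
  by apply functional_extensionality => k; rewrite eval_TC.
by apply.
Qed.

Lemma eval_const A (M : alg A) (HV : in_variety M) (v : nat -> A) (t : term A) :
  eval (const_map M \o v) t = const_map M (eval (L := Omega A) v t).
Proof.
elim: t => [n|s args IH] //=.
have -> : (fun k => eval (const_map M \o v) (args k)) = (fun k => const_map M (eval (L:=Omega A) v (args k))).
  by apply functional_extensionality => k.
exact: (const_hom HV (const_map M \o v)).
Qed.

Lemma const_inj A (M : alg A) (HV : in_variety M) : nontrivial M -> injective (const_map M).
Proof.
move=> [x [y nxy]] a b E; apply: NNPP => nab; apply: nxy.
by rewrite -(I1 HV (const_map M a) x y) {2}E (I10 HV nab).
Qed.

Lemma disc_EE A (M : alg A) (HV : in_variety M) (a0 a1 : A) (ne : a0 <> a1) :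
  nontrivial M -> Disc M -> elementary_embedding (@const_map A M).
Proof.
move=> nt D phi v.
have neM : const_map M a0 <> const_map M a1 by move/(const_inj HV nt).
rewrite (sem (@Omega_var A) (@Omega_disc A) ne) (sem HV D neM) (eval_const HV).
split => [->|/(const_inj HV nt)] //.
Qed.

Lemma coarse I (F : (I -> I -> Prop) -> Prop) (PF : partition_filter F) (P Q : I -> I -> Prop) :
  F P -> is_equiv Q -> (forall i j, P i j -> Q i j) -> F Q.
Proof. by case: PF => _ _ H _; apply: H. Qed.

Lemma kerP_equiv I X (f : I -> X) : is_equiv (kerP f).
Proof. by split => [i|i j|i j k] //=; rewrite /kerP => -> . Qed.

Lemma iff_equiv I (E : I -> Prop) : is_equiv (fun i j => E i <-> E j).
Proof. split => [i|i j|i j k]; tauto. Qed.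

Lemma kcstP I A (F : (I -> I -> Prop) -> Prop) (PF : partition_filter F) (a : A) :
  F (kerP (fun _ : I => a)).
Proof.
case: (PF) => _ [P FP] _ _; apply: (coarse PF FP (kerP_equiv _)) => //.
Qed.

Lemma F_and4 I (F : (I -> I -> Prop) -> Prop) (PF : partition_filter F) P1 P2 P3 P4 :
  F P1 -> F P2 -> F P3 -> F P4 -> F (fun i j => P1 i j /\ P2 i j /\ P3 i j /\ P4 i j).
Proof.
move=> F1 F2 F3 F4; case: PF => _ _ _ H.
by apply: (H) => //; apply: (H) => //; apply: (H).
Qed.

Lemma sw4P I A (F : (I -> I -> Prop) -> Prop) (PF : partition_filter F) (f g u v : OmegaF A F) :
  F (kerP (fun i => sw (sval f i) (sval g i) (sval u i) (sval v i))).
Proof.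
apply: (coarse PF (F_and4 PF (svalP f) (svalP g) (svalP u) (svalP v)) (kerP_equiv _)).
by rewrite /kerP => i j [-> [-> [-> ->]]].
Qed.

Lemma h_S4 A (L : alg A) I F Z (h : OmegaF A F -> L) (P : @limit_reduced_power_pres A L I F Z h)
  (f g u v W : OmegaF A F) :
  (forall i, sval W i = sw (sval f i) (sval g i) (sval u i) (sval v i)) ->
  h W = S4 (h f) (h g) (h u) (h v).
Proof.
case: P => _ _ _ _ H E; rewrite /S4 -args4_map; apply: H => i; rewrite E //.
Qed.

Lemma inBA_split I (F : (I -> I -> Prop) -> Prop) (E : I -> Prop) :
  F (fun i j => E i <-> E j) -> inBA F E /\ inBA F (fun i => ~ E i).
Proof.
move=> FE; split.
  case: (classic (exists i, E i)) => [[i0 Ei0]|N]; last by left => i Ei; apply: N; exists i.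
  right; exists (fun i j => E i <-> E j); split => //; exists i0 => j; tauto.
case: (classic (exists i, ~ E i)) => [[i0 Ei0]|N]; last by left => i Ei; apply: N; exists i.
right; exists (fun i j => E i <-> E j); split => //; exists i0 => j; tauto.
Qed.

Lemma eqset_F I A (F : (I -> I -> Prop) -> Prop) (PF : partition_filter F) (f g : OmegaF A F) :
  F (fun i j => (sval f i = sval g i) <-> (sval f j = sval g j)).
Proof.
case: (PF) => _ _ _ Hand.
apply: (coarse PF (Hand _ _ (svalP f) (svalP g)) (iff_equiv _)).
by rewrite /kerP => i j [-> ->].
Qed.

Lemma block_rep I (P : I -> I -> Prop) (X : I -> Prop) i i0 :
  is_equiv P -> (forall j, X j <-> P i j) -> X i0 -> forall j, X j <-> P i0 j.
Proof.
move=> [r s t] H Xi0 j; rewrite H; have := (H i0).1 Xi0 => Pii0.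
split => [Pij|Pi0j]; [apply: t (s _ _ Pii0) Pij | apply: t Pii0 Pi0j].
Qed.

Lemma inBA_and I (F : (I -> I -> Prop) -> Prop) (PF : partition_filter F) (X Y : I -> Prop) :
  inBA F X -> inBA F Y -> inBA F (fun i => X i /\ Y i).
Proof.
case: (classic (exists i, X i /\ Y i)) => [[i0 [Xi0 Yi0]]|N]; last first.
  by move=> _ _; left => i XY; apply: N; exists i.
move=> [HX|[P [FP [i HP]]]]; first by case: (HX i0).
move=> [HY|[Q [FQ [j HQ]]]]; first by case: (HY i0).
case: (PF) => Heq _ _ Hand.
right; exists (fun a b => P a b /\ Q a b); split; first exact: Hand.
exists i0 => k.
rewrite (block_rep (Heq _ FP) HP Xi0) (block_rep (Heq _ FQ) HQ Yi0); done.
Qed.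

Lemma part5 A (L : alg A) (HV : in_variety L) (a0 a1 : A) (ne : a0 <> a1) (nt : nontrivial L)
  I F Z (h : OmegaF A F -> L) (P : @limit_reduced_power_pres A L I F Z h) :
  simple_alg L <-> BA_ultrafilter F Z.
Proof.
have P' := P; case: P' => PF FZ hsurj hker hop.
have FZ' := FZ; case: FZ' => Zin Znon Zup Zand.
have properZ : proper_filter Z.
  move=> X ZX; apply: NNPP => N; case: nt => x [y nxy].
  have [f ef] := hsurj x; have [g eg] := hsurj y; apply: nxy; rewrite -ef -eg; apply/hker.
  apply: Zup ZX _ _; first exact: (inBA_split (eqset_F PF f g)).1.
  by move=> i Xi; case: N; exists i.
pose kc := fun a : A => (exist _ (fun _ : I => a) (kcstP PF a) : OmegaF A F).
split.
- move=> S; have D := simple_disc HV ne S.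
  split => // Z' FZ' pZ' sub X Z'X.
  case: (FZ') => Z'in _ _ Z'and.
  case: (Z'in _ Z'X) => [Xe|[Pb [FPb [i0 HP]]]].
    by have [i Xi] := pZ' _ Z'X; case: (Xe i).
  case: (PF) => Heq _ _ _.
  have [r sy tr] := Heq _ FPb.
  pose gf := fun i => if excluded_middle_informative (X i) then a0 else a1.
  have gP : F (kerP gf).
    apply: (coarse PF FPb (kerP_equiv _)) => i j Pij; rewrite /gf.
    have XX : X i <-> X j.
      rewrite !HP; split => H; [exact: tr H Pij | exact: tr H (sy _ _ Pij)].
    rewrite /kerP /gf; destruct (excluded_middle_informative (X i)), (excluded_middle_informative (X j)); simpl; [done | exfalso; tauto | exfalso; tauto | done].
  pose g := (exist _ gf gP : OmegaF A F).
  case: (classic (h (kc a0) = h g)) => E.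
    have := (hker (kc a0) g).1 E => Zg.
    apply: Zup Zg (Z'in _ Z'X) _ => i /=; rewrite /gf.
    by case: excluded_middle_informative.
  have HW := @h_S4 A L I F Z h P (kc a0) g (kc a0) (kc a1) g.
  rewrite D // in HW.
  have Hpt : forall i, sval g i = sw (sval (kc a0) i) (sval g i) (sval (kc a0) i) (sval (kc a1) i).
    move=> i /=; rewrite /gf /sw.
    by destruct (excluded_middle_informative (X i)); simpl;
       destruct (excluded_middle_informative _); simpl.
  have Zg := (hker g (kc a1)).1 (HW Hpt).
  have Z'g := sub _ Zg.
  have [i [Xi gi]] := pZ' _ (Z'and _ _ Z'X Z'g).
  by move: gi; rewrite /= /gf; case: excluded_middle_informative.
- move=> [_ _ maxZ]; apply: (disc_simple HV nt) => p q u v npq.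
  have [f ef] := hsurj p; have [g eg] := hsurj q.
  have [u' eu] := hsurj u; have [v' ev] := hsurj v; subst p q u v.
  pose W := (exist _ _ (sw4P PF f g u' v') : OmegaF A F).
  rewrite -(@h_S4 A L I F Z h P f g u' v' W) //.
  pose E := fun i => sval f i = sval g i.
  have [BE BNE] := inBA_split (eqset_F PF f g).
  have ZNE : Z (fun i => ~ E i).
    pose Z' := fun Y => inBA F Y /\ exists X, Z X /\ forall i, X i -> E i -> Y i.
    case: (classic (proper_filter Z')) => pr.
      have BF : BA_filter F Z'.
        split.
        + by move=> Y [].
        + have [X0 ZX0] := Znon; exists X0; split; [exact: Zin | exists X0; split => //].
        + move=> Y Y' [_ [X [ZX HX]]] iY' sb; split => //; exists X; split => // i Xi Ei.
          by apply: sb; apply: HX.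
        + move=> Y Y' [iY [X [ZX HX]]] [iY' [X' [ZX' HX']]]; split; first exact: inBA_and.
          exists (fun i => X i /\ X' i); split; first exact: Zand.
          by move=> i [Xi X'i] Ei; split; [apply: HX | apply: HX'].
      have ZE : Z E.
        apply: (maxZ Z' BF pr) => [X ZX|]; first by split; [exact: Zin | exists X].
        have [X0 ZX0] := Znon; split => //; exists X0; split => //.
      by case: npq; apply/hker.
    have [Y [Z'Y nY]] : exists Y, Z' Y /\ ~ exists i, Y i.
      apply: NNPP => N; apply: pr => Y ZY; apply: NNPP => nY; apply: N; by exists Y.
    case: Z'Y => _ [X [ZX HX]].
    apply: Zup ZX BNE _ => i Xi Ei; apply: nY; exists i; exact: HX.
  apply/hker; apply: Zup ZNE (inBA_split (eqset_F PF W v')).1 _ => i nE /=.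
  by rewrite /sw; case: excluded_middle_informative.
Qed.

Theorem mainTheorem3 (A : Type) (L : alg A) :
  infinite_type A -> in_variety L -> nontrivial L ->
  ((simple_alg L <-> subdirectly_irreducible L) /\
   (subdirectly_irreducible L <-> directly_indecomposable L) /\
   (directly_indecomposable L <-> elementary_embedding (@const_map A L))) /\
  (forall (I : Type) (F : (I -> I -> Prop) -> Prop) (Z : (I -> Prop) -> Prop)
          (h : OmegaF A F -> L),
     limit_reduced_power_pres Z h ->
     (simple_alg L <-> BA_ultrafilter F Z)).
Proof.
move=> inf HV nt.
have [a0 _] := inf nil; have [a1 H1] := inf (a0 :: nil).
have ne : a0 <> a1 by move=> E; apply: H1; left.
have SD := simple_disc HV ne; have DS := disc_simple HV nt.
have SSI := @simple_SI A L; have SIDI := @SI_DI A L a0.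
have DID := DI_disc HV ne; have DEE := disc_EE HV ne nt; have EED := @EE_disc A L a0.
split; last by move=> I F Z h P; exact: (@part5 A L HV a0 a1 ne nt I F Z h P).
split; first by split => [/SSI|/SIDI/DID/DS].
split; first by split => [/SIDI|/DID/DS/SSI].
by split => [/DID/DEE|/EED/DS/SSI/SIDI].
Qed.
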